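(* Let $\lambda_1,\lambda_2\ge0$ with $\lambda_1+\lambda_2(p-1)>0$, and let $w_i=\lambda_1+\lambda_2(p-i)$ for $i=1,\dots,p$ (the OSCAR weights). Let $\mathbf A\in\mathbb R^{n\times p}$ have columns with $\mathbf 1^T\mathbf a_k=0$ and $\|\mathbf a_k\|_2=1$ for all $k$, let $\rho_{ij}=\mathbf a_i^T\mathbf a_j$, and let $\mathbf y\in\mathbb R^n$. Let $\widehat{\mathbf x}$ be any minimizer of $\frac12\|\mathbf A\mathbf x-\mathbf y\|_2^2+\sum_{i=1}^p w_i|x|_{[i]}$ over $\mathbf x\in\mathbb R^p$. Then for every pair $(i,j)$ with $\|\mathbf y\|_2\sqrt{2-2\rho_{ij}\operatorname{sign}(\widehat x_i\widehat x_j)}<\lambda_2$, we have $|\widehat x_i|=|\widehat x_j|$.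
   Context: $|x|_{[i]}$ denotes the $i$-th largest component of $\mathbf x$ in magnitude; $\mathbf a_k$ is the $k$-th column of $\mathbf A$; $\mathbf 1$ is the all-ones vector; $\operatorname{sign}$ denotes the sign function. *)

(* Defs.v *)
From HB Require Import structures.
From mathcomp Require Import all_boot all_order all_algebra.
Set Implicit Arguments. Unset Strict Implicit. Unset Printing Implicit Defensive.
Import Order.TTheory GRing.Theory Num.Theory.
Local Open Scope ring_scope.

Definition sorted_abs (R : rcfType) (p : nat) (x : 'cV[R]_p) : seq R :=
  sort (fun a b => b <= a) [seq `|x i 0| | i <- enum 'I_p].

(* |x|_[k+1] : the (k+1)-th largest entry of x in magnitude (0-based k) *)
Definition abs_ord (R : rcfType) (p : nat) (x : 'cV[R]_p) (k : nat) : R :=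
  nth 0 (sorted_abs x) k.

(* OSCAR weight w_{k+1} = l1 + l2 (p - (k+1)), 0-based k *)
Definition oscar_w (R : rcfType) (l1 l2 : R) (p k : nat) : R :=
  l1 + l2 * (p - k.+1)%:R.

Definition norm2 (R : rcfType) (n : nat) (v : 'cV[R]_n) : R :=
  Num.sqrt (\sum_(r < n) v r 0 ^+ 2).

Definition oscar_obj (R : rcfType) (n p : nat) (l1 l2 : R)
  (A : 'M[R]_(n, p)) (y : 'cV[R]_n) (x : 'cV[R]_p) : R :=
  2^-1 * (\sum_(r < n) (A *m x - y) r 0 ^+ 2)
  + \sum_(k < p) oscar_w l1 l2 p k * abs_ord x k.

(* Main.v *)
Require Import Defs.
From HB Require Import structures.
From mathcomp Require Import all_boot all_order all_algebra.
From mathcomp Require Import ring lra.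
Import Order.TTheory GRing.Theory Num.Theory.
Local Open Scope ring_scope.

Set Implicit Arguments. Unset Strict Implicit. Unset Printing Implicit Defensive.

Section Aux.
Variable R : rcfType.

Definition ge_rel := fun a b : R => b <= a.

Definition Qm (m : nat) (s : seq R) : R :=
  \sum_(k < m) (m - k.+1)%:R * nth 0 s k.

Lemma Qm_cons m a s : Qm m.+1 (a :: s) = m%:R * a + Qm m s.
Proof.
rewrite /Qm big_ord_recl /= subn1 /=; congr (_ + _).
Qed.

Lemma sum_seq_const (s : seq R) (a : R) : \sum_(b <- s) a = (size s)%:R * a.
Proof.
elim: s => [|c s IH]; first by rewrite big_nil mul0r.
by rewrite big_cons IH /= -addn1 natrD; ring.
Qed.

Lemma sortedQ (s : seq R) : sorted ge_rel s ->
  2 * Qm (size s) s + \sum_(a <- s) a =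
  \sum_(a <- s) \sum_(b <- s) Num.max a b.
Proof.
elim: s => [|a s IH]; first by move=> _; rewrite /Qm !big_nil big_ord0; ring.
move=> /= hp.
have tr : transitive ge_rel by move=> x y z; rewrite /ge_rel => h1 h2; exact: le_trans h2 h1.
have hall := order_path_min tr hp.
have IH' := IH (path_sorted hp).
rewrite Qm_cons !big_cons maxxx.
have e1 : \sum_(b <- s) Num.max a b = \sum_(b <- s) a.
  rewrite big_seq_cond [RHS]big_seq_cond; apply: eq_bigr => b /andP[hb _].
  by move/allP: hall => /(_ b hb); rewrite /ge_rel => h; rewrite max_l.
have e2 : \sum_(c <- s) \sum_(b <- a :: s) Num.max c b =
          \sum_(c <- s) a + \sum_(c <- s) \sum_(b <- s) Num.max c b.
  rewrite -big_split /=.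
  rewrite big_seq_cond [RHS]big_seq_cond; apply: eq_bigr => b /andP[hb _].
  rewrite big_cons; congr (_ + _).
  by move/allP: hall => /(_ b hb); rewrite /ge_rel => h; rewrite max_r.
rewrite e1 e2 -IH' !sum_seq_const; ring.
Qed.

Lemma pen_identity (p : nat) (l1 l2 : R) (u : 'I_p -> R) :
  2 * (\sum_(k < p) oscar_w l1 l2 p k *
        nth 0 (sort (fun a b => b <= a) [seq u i | i <- enum 'I_p]) k)
  = 2 * l1 * (\sum_i u i) + l2 * (\sum_i \sum_j Num.max (u i) (u j) - \sum_i u i).
Proof.
set t := [seq u i | i <- enum 'I_p].
set s := sort _ t.
have hperm : perm_eq s t by rewrite /s perm_sort.
have hsz : size s = p by rewrite size_sort size_map size_enum_ord.
have hsort : sorted ge_rel s.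
  apply: sort_sorted => x y; rewrite /ge_rel; exact: le_total.
have hQ := sortedQ hsort; rewrite hsz in hQ.
have hS : \sum_(k < p) nth 0 s k = \sum_i u i.
  transitivity (\sum_(a <- s) a); first by rewrite (big_nth 0) hsz big_mkord.
  by rewrite (perm_big _ hperm) big_map big_enum.
have hM : \sum_(a <- s) \sum_(b <- s) Num.max a b = \sum_i \sum_j Num.max (u i) (u j).
  rewrite (perm_big _ hperm) big_map big_enum /=; apply: eq_bigr => i _.
  by rewrite (perm_big _ hperm) big_map big_enum.
have hS' : \sum_(a <- s) a = \sum_i u i.
  by rewrite (perm_big _ hperm) big_map big_enum.
rewrite /oscar_w.
rewrite (eq_bigr (fun k : 'I_p => l1 * nth 0 s k + l2 * ((p - k.+1)%:R * nth 0 s k))); last first.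
  by move=> k _; ring.
rewrite big_split /= -!mulr_sumr hS.
rewrite -hM -hS'; rewrite /Qm in hQ; rewrite -hQ; ring.
Qed.

End Aux.

Section Aux2.
Variable R : rcfType.

Lemma max_pt (a b c e : R) : 0 <= e -> b + e <= a - e ->
  Num.max (a - e) c + Num.max (b + e) c <= Num.max a c + Num.max b c.
Proof.
move=> he hab.
case: (leP (a - e) c) => h1; case: (leP (b + e) c) => h2;
case: (leP a c) => h3; case: (leP b c) => h4; lra.
Qed.

Lemma sum3 (p : nat) (F : 'I_p -> R) (i j : 'I_p) : i != j ->
  \sum_k F k = F i + F j + \sum_(k | (k != i) && (k != j)) F k.
Proof.
move=> hij; rewrite (bigD1 i) //= (bigD1 j) /=; last by rewrite eq_sym.
by rewrite addrA.
Qed.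

Definition Mx (p : nat) (u : 'I_p -> R) := \sum_k \sum_l Num.max (u k) (u l).

Lemma Mx_split (p : nat) (u : 'I_p -> R) (i j : 'I_p) : i != j ->
  Mx u = Num.max (u i) (u i) + Num.max (u i) (u j) + Num.max (u j) (u i) + Num.max (u j) (u j)
   + (\sum_(l | (l != i) && (l != j)) (Num.max (u i) (u l) + Num.max (u j) (u l)))
   + (\sum_(k | (k != i) && (k != j)) (Num.max (u k) (u i) + Num.max (u k) (u j)))
   + (\sum_(k | (k != i) && (k != j)) \sum_(l | (l != i) && (l != j)) Num.max (u k) (u l)).
Proof.
move=> hij; rewrite /Mx (sum3 (fun k => \sum_l Num.max (u k) (u l)) hij).
rewrite (sum3 (fun l => Num.max (u i) (u l)) hij) (sum3 (fun l => Num.max (u j) (u l)) hij).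
rewrite (@eq_bigr _ _ _ _ _ (fun k => (k != i) && (k != j)) (fun k => \sum_l Num.max (u k) (u l)) (fun k => Num.max (u k) (u i) + Num.max (u k) (u j) +
    \sum_(l | (l != i) && (l != j)) Num.max (u k) (u l))); last first.
  by move=> k _; exact: (sum3 (fun l => Num.max (u k) (u l)) hij).
rewrite !big_split /=; ring.
Qed.

Lemma Mx_decr (p : nat) (u v : 'I_p -> R) (i j : 'I_p) (e : R) : i != j ->
  0 <= e -> u j + e <= u i - e ->
  v i = u i - e -> v j = u j + e ->
  (forall k, k != i -> k != j -> v k = u k) ->
  Mx v <= Mx u - 2 * e.
Proof.
move=> hij he hle hvi hvj hvk.
rewrite (Mx_split v hij) (Mx_split u hij) hvi hvj.
have r1 : \sum_(l | (l != i) && (l != j)) (Num.max (u i - e) (v l) + Num.max (u j + e) (v l))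
   <= \sum_(l | (l != i) && (l != j)) (Num.max (u i) (u l) + Num.max (u j) (u l)).
  apply: ler_sum => l /andP[h1 h2]; rewrite hvk //; exact: max_pt.
have r2 : \sum_(k | (k != i) && (k != j)) (Num.max (v k) (u i - e) + Num.max (v k) (u j + e))
   <= \sum_(k | (k != i) && (k != j)) (Num.max (u k) (u i) + Num.max (u k) (u j)).
  apply: ler_sum => l /andP[h1 h2]; rewrite hvk // !(maxC (u l)); exact: max_pt.
have r3 : \sum_(k | (k != i) && (k != j)) \sum_(l | (l != i) && (l != j)) Num.max (v k) (v l)
   = \sum_(k | (k != i) && (k != j)) \sum_(l | (l != i) && (l != j)) Num.max (u k) (u l).
  apply: eq_bigr => k /andP[h1 h2]; apply: eq_bigr => l /andP[h3 h4].
  by rewrite !hvk.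
have m1 : Num.max (u i - e) (u j + e) = u i - e by rewrite max_l.
have m2 : Num.max (u j + e) (u i - e) = u i - e by rewrite max_r.
have m3 : Num.max (u i) (u j) = u i by rewrite max_l //; lra.
have m4 : Num.max (u j) (u i) = u i by rewrite max_r //; lra.
rewrite !maxxx m1 m2 m3 m4 r3; lra.
Qed.

Lemma sum_prod (n : nat) (a b : 'I_n -> R) :
  \sum_k \sum_l a k * b l = (\sum_k a k) * (\sum_l b l).
Proof. by rewrite mulr_suml; apply: eq_bigr => k _; rewrite mulr_sumr. Qed.

Lemma cauchy_schwarz (n : nat) (F G : 'I_n -> R) :
  (\sum_r F r * G r) ^+ 2 <= (\sum_r F r ^+ 2) * (\sum_r G r ^+ 2).
Proof.
have h : 0 <= \sum_k \sum_l (F k * G l - F l * G k) ^+ 2.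
  by apply: sumr_ge0 => k _; apply: sumr_ge0 => l _; exact: sqr_ge0.
have e : \sum_k \sum_l (F k * G l - F l * G k) ^+ 2 =
   \sum_k \sum_l (F k ^+ 2 * G l ^+ 2) + \sum_k \sum_l (G k ^+ 2 * F l ^+ 2)
   - \sum_k \sum_l ((2 * (F k * G k)) * (F l * G l)).
  rewrite -big_split -sumrB /=; apply: eq_bigr => k _.
  rewrite -big_split -sumrB /=; apply: eq_bigr => l _; ring.
rewrite e !sum_prod -mulr_sumr in h.
rewrite expr2; lra.
Qed.

End Aux2.

Section Core.
Variable R : rcfType.

Definition pen (p : nat) (l1 l2 : R) (z : 'cV[R]_p) :=
  \sum_(k < p) oscar_w l1 l2 p k * abs_ord z k.

Lemma pen_id (p : nat) (l1 l2 : R) (z : 'cV[R]_p) :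
  2 * pen l1 l2 z = 2 * l1 * (\sum_i `|z i 0|) + l2 * (Mx (fun i => `|z i 0|) - \sum_i `|z i 0|).
Proof. exact: (pen_identity l1 l2 (fun i => `|z i 0|)). Qed.

Lemma pen_ge0 (p : nat) (l1 l2 : R) (z : 'cV[R]_p) : 0 <= l1 -> 0 <= l2 -> 0 <= pen l1 l2 z.
Proof.
move=> h1 h2; apply: sumr_ge0 => k _; apply: mulr_ge0.
  rewrite /oscar_w; apply: addr_ge0 => //; apply: mulr_ge0 => //.
rewrite /abs_ord /sorted_abs.
set s := sort _ _.
have hsz : size s = p by rewrite size_sort size_map size_enum_ord.
have : nth 0 s k \in s by rewrite mem_nth // hsz.
rewrite mem_sort => /mapP [i _ ->]; exact: normr_ge0.
Qed.

Lemma pen0 (p : nat) (l1 l2 : R) : pen l1 l2 (0 : 'cV[R]_p) = 0.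
Proof.
have h := pen_id l1 l2 (0 : 'cV[R]_p).
have e1 : \sum_i `|(0 : 'cV[R]_p) i 0| = 0 by apply: big1 => i _; rewrite mxE normr0.
have e2 : Mx (fun i => `|(0 : 'cV[R]_p) i 0|) = 0.
  by apply: big1 => i _; apply: big1 => k _; rewrite !mxE normr0 maxxx.
rewrite e1 e2 in h; lra.
Qed.


Lemma core (n p : nat) (l1 l2 : R) (A : 'M[R]_(n, p)) (y : 'cV[R]_n) (x : 'cV[R]_p)
  (i j : 'I_p) (si sj : R) :
  0 <= l1 -> 0 <= l2 ->
  (forall k : 'I_p, \sum_(r < n) A r k ^+ 2 = 1) ->
  (forall z : 'cV[R]_p, oscar_obj l1 l2 A y x <= oscar_obj l1 l2 A y z) ->
  i != j -> `|x j 0| < `|x i 0| -> si ^+ 2 = 1 -> sj ^+ 2 = 1 ->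
  x i 0 = si * `|x i 0| -> x j 0 = sj * `|x j 0| ->
  norm2 y * Num.sqrt (2 - 2 * (si * sj) * (\sum_(r < n) A r i * A r j)) < l2 -> False.
Proof.
move=> hl1 hl2 hA hopt hij hab hsi hsj hxi hxj hcond.
set a := `|x i 0| in hab hxi *; set b := `|x j 0| in hab hxj *.
have hb0 : 0 <= b by exact: normr_ge0.
have nsi : `|si| = 1 by apply/eqP; rewrite -sqr_norm_eq1 hsi.
have nsj : `|sj| = 1 by apply/eqP; rewrite -sqr_norm_eq1 hsj.
pose rr r := (A *m x - y) r 0.
pose v r := sj * A r j - si * A r i.
pose q := \sum_r v r ^+ 2.
pose C := \sum_r rr r * v r.
set rho := \sum_(r < n) A r i * A r j in hcond.
have hq : q = 2 - 2 * (si * sj) * rho.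
  rewrite /q /rho.
  transitivity (sj ^+ 2 * (\sum_r A r j ^+ 2) + si ^+ 2 * (\sum_r A r i ^+ 2)
      - 2 * (si * sj) * (\sum_(r < n) A r i * A r j)).
    rewrite !mulr_sumr -big_split -sumrB /=; apply: eq_bigr => r _; rewrite /v; ring.
  by rewrite !hA hsi hsj; ring.
have q0 : 0 <= q by apply: sumr_ge0 => r _; exact: sqr_ge0.
have hr : \sum_r rr r ^+ 2 <= \sum_r y r 0 ^+ 2.
  have h := hopt 0; rewrite /oscar_obj in h.
  have := pen0 p l1 l2; rewrite /pen => e0; rewrite e0 in h.
  have := pen_ge0 x hl1 hl2; rewrite /pen => g0.
  have e : \sum_r (A *m 0 - y) r 0 ^+ 2 = \sum_r y r 0 ^+ 2.
    by apply: eq_bigr => r _; rewrite mulmx0 !mxE sub0r sqrrN.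
  rewrite e in h; rewrite /rr; lra.
have hC : C <= norm2 y * Num.sqrt q.
  have cs := cauchy_schwarz rr v.
  apply: (le_trans (ler_norm C)).
  rewrite -sqrtr_sqr /norm2 -sqrtrM; last by apply: sumr_ge0 => r _; exact: sqr_ge0.
  apply: ler_wsqrtr; apply: (le_trans cs); apply: ler_wpM2r => //.
pose c := l2 - norm2 y * Num.sqrt q.
have c0 : 0 < c by rewrite /c; rewrite -hq in hcond; lra.
pose d1 := (a - b) / 2.
pose d2 := c / (q + 1).
have d10 : 0 < d1 by rewrite /d1; apply: divr_gt0; lra.
have d20 : 0 < d2 by rewrite /d2; apply: divr_gt0; lra.
have d2e : d2 * (q + 1) = c by rewrite /d2 mulfVK //; apply/eqP => h; lra.
have d1e : d1 * 2 = a - b by rewrite /d1 mulfVK //; apply/eqP => h; lra.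
pose e := if d1 <= d2 then d1 else d2.
have e0 : 0 < e by rewrite /e; case: ifP => h; [lra | move/negbT: h; rewrite -ltNge => h; lra].
have e1 : e <= d1 by rewrite /e; case: ifP => h; [lra | move/negbT: h; rewrite -ltNge => h; lra].
have e2 : e <= d2 by rewrite /e; case: ifP => h; [lra | move/negbT: h; rewrite -ltNge => h; lra].
have e3 : e * (q + 1) <= c by rewrite -d2e; apply: ler_wpM2r => //; lra.
pose D : 'cV[R]_p := \col_k (e * (sj * (k == j)%:R - si * (k == i)%:R)).
pose x' := x + D.
have Di : D i 0 = - (e * si) by rewrite /D mxE eqxx (negbTE hij) /=; ring.
have Dj : D j 0 = e * sj by rewrite /D mxE eqxx eq_sym (negbTE hij) /=; ring.
have Dk : forall k, k != i -> k != j -> D k 0 = 0.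
  by move=> k hki hkj; rewrite /D mxE (negbTE hki) (negbTE hkj) /=; ring.
have AD : forall r, (A *m D) r 0 = e * v r.
  move=> r; rewrite mxE (sum3 (fun k => A r k * D k 0) hij) Di Dj big1; last first.
    by move=> k /andP[h1 h2]; rewrite Dk // mulr0.
  rewrite /v; ring.
have hloss : \sum_r (A *m x' - y) r 0 ^+ 2 = \sum_r rr r ^+ 2 + 2 * (e * C) + e * (e * q).
  rewrite /C /q !mulr_sumr -!big_split /=; apply: eq_bigr => r _.
  have -> : (A *m x' - y) r 0 = rr r + e * v r.
    by rewrite /x' mulmxDr !mxE -AD /rr !mxE; ring.
  ring.
have x'k : forall k, x' k 0 = x k 0 + D k 0 by move=> k; rewrite /x' mxE.
have ui : `|x' i 0| = a - e.
  rewrite x'k.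
  have -> : x i 0 + D i 0 = si * (a - e) by rewrite Di {1}hxi; ring.
  rewrite normrM nsi mul1r ger0_norm //; lra.
have uj : `|x' j 0| = b + e.
  rewrite x'k; have -> : x j 0 + D j 0 = sj * (b + e) by rewrite Dj {1}hxj; ring.
  rewrite normrM nsj mul1r ger0_norm //; lra.
have uk : forall k, k != i -> k != j -> `|x' k 0| = `|x k 0|.
  by move=> k h1 h2; rewrite x'k Dk // addr0.
have hbe : b + e <= a - e by lra.
have hM := Mx_decr (u := fun k => `|x k 0|) (v := fun k => `|x' k 0|) hij (ltW e0) hbe ui uj uk.
have hS : \sum_k `|x' k 0| = \sum_k `|x k 0|.
  rewrite (sum3 (fun k => `|x' k 0|) hij) (sum3 (fun k => `|x k 0|) hij) ui uj.
  rewrite (eq_bigr (fun k => `|x k 0|)); last by move=> k /andP[h1 h2]; rewrite uk.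
  rewrite /a /b; ring.
have hpen : pen l1 l2 x' <= pen l1 l2 x - l2 * e.
  have h1 := pen_id l1 l2 x; have h2 := pen_id l1 l2 x'.
  rewrite hS in h2.
  have h3 := ler_wpM2l hl2 hM.
  lra.
have h : 2^-1 * (\sum_r rr r ^+ 2) + pen l1 l2 x <=
   2^-1 * (\sum_r rr r ^+ 2 + 2 * (e * C) + e * (e * q)) + pen l1 l2 x'.
  by rewrite -hloss; exact: hopt x'.
have k1 : e * C <= e * (l2 - c) by apply: ler_wpM2l; [exact: ltW | rewrite /c; lra].
have k2 : e * (e * q) <= e * (c - e) by apply: ler_wpM2l; [exact: ltW | lra].
have k3 : 0 < e * c by exact: mulr_gt0.
have k4 : 0 < e * e by exact: mulr_gt0.
lra.
Qed.



Lemma half (n p : nat) (l1 l2 : R) (A : 'M[R]_(n, p)) (y : 'cV[R]_n) (x : 'cV[R]_p)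
  (i j : 'I_p) :
  0 <= l1 -> 0 <= l2 ->
  (forall k : 'I_p, \sum_(r < n) A r k ^+ 2 = 1) ->
  (forall z : 'cV[R]_p, oscar_obj l1 l2 A y x <= oscar_obj l1 l2 A y z) ->
  i != j -> `|x j 0| < `|x i 0| ->
  norm2 y * Num.sqrt (2 - 2 * (\sum_(r < n) A r i * A r j)
                             * Num.sg (x i 0 * x j 0)) < l2 -> False.
Proof.
move=> hl1 hl2 hA hopt hij hab hcond.
set rho := \sum_(r < n) A r i * A r j in hcond.
have xi0 : x i 0 != 0.
  by apply/eqP => h; move: hab; rewrite h normr0 ltNge normr_ge0.
pose si := Num.sg (x i 0).
have hsi : si ^+ 2 = 1 by rewrite /si sqr_sg xi0.
have N0 : 0 <= norm2 y by exact: sqrtr_ge0.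
have [xj0|xj0] := eqVneq (x j 0) 0.
  pose sj := if 0 <= rho then si else - si.
  have hsj : sj ^+ 2 = 1 by rewrite /sj; case: ifP => _; rewrite ?sqrrN hsi.
  apply: (@core n p l1 l2 A y x i j si sj) => //.
  - exact: numEsg.
  - by rewrite xj0 normr0 mulr0.
  - apply: le_lt_trans hcond; apply: ler_wpM2l => //; apply: ler_wsqrtr.
    rewrite xj0 mulr0 sgr0 mulr0.
    have : 0 <= si * sj * rho.
      rewrite /sj; case: ifP => h.
        by rewrite -expr2 hsi mul1r.
      have -> : si * - si * rho = - rho by rewrite mulrN -expr2 hsi mulN1r.
      move/negbT: h; rewrite -ltNge => h; lra.
    rewrite -/rho; lra.
pose sj := Num.sg (x j 0).
have hsj : sj ^+ 2 = 1 by rewrite /sj sqr_sg xj0.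
apply: (@core n p l1 l2 A y x i j si sj) => //.
- exact: numEsg.
- exact: numEsg.
- have -> : 2 - 2 * (si * sj) * rho = 2 - 2 * rho * Num.sg (x i 0 * x j 0).
    by rewrite sgrM /si /sj; ring.
  exact: hcond.
Qed.

End Core.

Theorem corollary2 (R : rcfType) (n p : nat) (l1 l2 : R)
  (A : 'M[R]_(n, p)) (y : 'cV[R]_n) (xh : 'cV[R]_p) :
  0 <= l1 -> 0 <= l2 -> 0 < l1 + l2 * (p.-1)%:R ->
  (forall k : 'I_p, \sum_(r < n) A r k = 0) ->
  (forall k : 'I_p, \sum_(r < n) A r k ^+ 2 = 1) ->
  (forall z : 'cV[R]_p, oscar_obj l1 l2 A y xh <= oscar_obj l1 l2 A y z) ->
  forall i j : 'I_p,
    norm2 y * Num.sqrt (2 - 2 * (\sum_(r < n) A r i * A r j)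
                             * Num.sg (xh i 0 * xh j 0)) < l2 ->
    `|xh i 0| = `|xh j 0|.
Proof.
move=> hl1 hl2 _ _ hA hopt i j hcond.
have [->|hij] := eqVneq i j; first by [].
case: (ltgtP `|xh i 0| `|xh j 0|) => // h.
- exfalso; apply: (half hl1 hl2 hA hopt (i := j) (j := i)); first by rewrite eq_sym.
    exact: h.
  have -> : \sum_(r < n) A r j * A r i = \sum_(r < n) A r i * A r j.
    by apply: eq_bigr => r _; rewrite mulrC.
  by rewrite (mulrC (xh j 0)).
- exfalso; exact: (half hl1 hl2 hA hopt hij h hcond).
Qed.
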